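(* Let $k$ be a field, $\mathsf{E}$ a locally finite $k$-linear category, $P$ a locally finite left $\mathsf{E}$-module, and $(Q_\xi)_{\xi\in\Xi}$ an arbitrary family of big $\mathsf{E}$-submodules of $P$. Then $\bigcap_{\xi\in\Xi}Q_\xi$ is a big $\mathsf{E}$-submodule of $P$.
   Context: A small $k$-linear category $\mathsf{E}$ has $k$-vector spaces $\operatorname{Hom}_\mathsf{E}(x,y)$, $k$-bilinear associative composition and identities with $\mathrm{id}_x\ne0$. A left $\mathsf{E}$-module is a $k$-linear functor $P:\mathsf{E}\to k\text{-Vect}$; it is locally finite if every $P(x)$ is finite-dimensional. Write $x\preceq y$ if there are $n\ge1$ and objects $x=z_0,\dots,z_n=y$ with $\operatorname{Hom}_\mathsf{E}(z_{i-1},z_i)\neq0$ for all $i$. $\mathsf{E}$ is locally finite if all Hom spaces are finite-dimensional and every $\{z:x\preceq z\preceq y\}$ is finite. A left $\mathsf{E}$-module $T$ is contrafinite if for every object $y$ there is a finite set of objects $A$ such that the action map $\operatorname{Hom}_\mathsf{E}(x,y)\otimes_kT(x)\to T(y)$ vanishes for all $x\notin A$. A submodule $Q\subseteq P$ is big if $P/Q$ is contrafinite. *)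

(* Defs.v *)
From Stdlib Require Import List Relations.
From HB Require Import structures.
From mathcomp Require Import all_boot all_algebra.
Set Implicit Arguments. Unset Strict Implicit. Unset Printing Implicit Defensive.
Import GRing.Theory.
Local Open Scope ring_scope.

Record kcat (k : fieldType) := KCat {
  Obj : Type;
  Hom : Obj -> Obj -> lmodType k;
  comp : forall x y z, Hom y z -> Hom x y -> Hom x z;
  idm : forall x, Hom x x;
  comp_linl : forall x y z (a : k) (g1 g2 : Hom y z) (f : Hom x y),
      comp (a *: g1 + g2) f = a *: comp g1 f + comp g2 f;
  comp_linr : forall x y z (a : k) (g : Hom y z) (f1 f2 : Hom x y),
      comp g (a *: f1 + f2) = a *: comp g f1 + comp g f2;
  comp_assoc : forall x y z w (h : Hom z w) (g : Hom y z) (f : Hom x y),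
      comp h (comp g f) = comp (comp h g) f;
  comp_id_l : forall x y (f : Hom x y), comp (idm y) f = f;
  comp_id_r : forall x y (f : Hom x y), comp f (idm x) = f;
  idm_neq0 : forall x, idm x <> 0
}.

Arguments Hom {k} _ _ _.
Arguments comp {k} _ {_ _ _} _ _.
Arguments idm {k} _ _.

(* A left E-module: a k-linear functor E -> k-Vect. *)
Record kmodule (k : fieldType) (E : kcat k) := KModule {
  MObj : Obj E -> lmodType k;
  act : forall x y, Hom E x y -> MObj x -> MObj y;
  act_linf : forall x y (a : k) (f1 f2 : Hom E x y) (p : MObj x),
      act (a *: f1 + f2) p = a *: act f1 p + act f2 p;
  act_linp : forall x y (a : k) (f : Hom E x y) (p1 p2 : MObj x),
      act f (a *: p1 + p2) = a *: act f p1 + act f p2;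
  act_comp : forall x y z (g : Hom E y z) (f : Hom E x y) (p : MObj x),
      act (comp E g f) p = act g (act f p);
  act_id : forall x (p : MObj x), act (idm E x) p = p
}.

Arguments MObj {k E} _ _.
Arguments act {k E} _ {_ _} _ _.

Definition findim (k : fieldType) (V : lmodType k) : Prop :=
  exists s : seq V, forall v : V,
    exists c : 'I_(size s) -> k, v = \sum_(i < size s) c i *: s`_i.

Definition hom_nonzero (k : fieldType) (E : kcat k) (x y : Obj E) : Prop :=
  exists f : Hom E x y, f <> 0.

Definition preceq (k : fieldType) (E : kcat k) : relation (Obj E) :=
  clos_trans (Obj E) (@hom_nonzero k E).

Definition locally_finite_cat (k : fieldType) (E : kcat k) : Prop :=
  (forall x y : Obj E, findim (Hom E x y)) /\
  (forall x y : Obj E, exists s : list (Obj E),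
      forall z, @preceq k E x z -> @preceq k E z y -> In z s).

Definition locally_finite_mod (k : fieldType) (E : kcat k) (P : kmodule E) :
  Prop := forall x, findim (MObj P x).

(* Subfunctors are given by a predicate on each P(x). *)
Definition is_submodule (k : fieldType) (E : kcat k) (P : kmodule E)
  (Q : forall x, MObj P x -> Prop) : Prop :=
  (forall x, Q x 0) /\
  (forall x (a : k) (p1 p2 : MObj P x), Q x p1 -> Q x p2 -> Q x (a *: p1 + p2)) /\
  (forall x y (f : Hom E x y) (p : MObj P x), Q x p -> Q y (act P f p)).

(* Contrafinite module: for every y there is a finite A such that the action
   map Hom(x,y) (x) T(x) -> T(y) vanishes for x notin A; the image of this map
   is spanned by the images act f t of simple tensors. *)
Definition contrafinite (k : fieldType) (E : kcat k) (T : kmodule E) : Prop :=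
  forall y : Obj E, exists A : list (Obj E),
    forall x : Obj E, ~ In x A ->
      forall (f : Hom E x y) (t : MObj T x), act T f t = 0.

(* Q is big in P: P/Q is contrafinite, i.e. (unfolding the quotient module)
   for every y there is a finite A with act f p in Q(y) for all x notin A,
   f : Hom(x,y), p in P(x). *)
Definition big (k : fieldType) (E : kcat k) (P : kmodule E)
  (Q : forall x, MObj P x -> Prop) : Prop :=
  is_submodule Q /\
  forall y : Obj E, exists A : list (Obj E),
    forall x : Obj E, ~ In x A ->
      forall (f : Hom E x y) (p : MObj P x), Q y (act P f p).

Definition bigcap_sub (k : fieldType) (E : kcat k) (P : kmodule E) (I : Type)
  (Q : I -> forall x, MObj P x -> Prop) : forall x, MObj P x -> Prop :=
  fun x p => forall i, Q i x p.

(* Main.v *)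
Require Import Defs.
From mathcomp Require Import all_boot all_algebra.
From Stdlib Require Import Classical List.
From mathcomp Require Import zify.
Set Implicit Arguments. Unset Strict Implicit. Unset Printing Implicit Defensive.
Import GRing.Theory.
Local Open Scope ring_scope.

Definition subsp (k : fieldType) n (W : 'rV[k]_n -> Prop) :=
  W 0 /\ forall a u v, W u -> W v -> W (a *: u + v).

Lemma rep_exists (k : fieldType) n (W : 'rV[k]_n -> Prop) :
  subsp W -> exists M : 'M[k]_n, forall v, W v <-> (v <= M)%MS.
Proof.
move=> [W0 Wl].
suff H: forall d (M : 'M[k]_n), (forall v, (v <= M)%MS -> W v) ->
   (n - \rank M < d)%N -> exists M' : 'M[k]_n, forall v, W v <-> (v <= M')%MS.
  apply: (H n.+1 0).
    by move=> v; rewrite submx0 => /eqP ->.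
  by rewrite mxrank0 subn0 ltnSn.
elim=> [|d IH] M HM Hd; first by rewrite ltn0 in Hd.
case: (classic (forall v, W v -> (v <= M)%MS)) => [Hall|].
  by exists M => v; split; [exact: Hall | exact: HM].
move=> /not_all_ex_not [v Hv]; have [Wv nvM] := imply_to_and _ _ Hv.
have Hlt : (\rank M < \rank (M + v)%MS)%N.
  have: (M < M + v)%MS.
    rewrite ltmxE addsmxSl /=; apply/negP => H.
    by apply: nvM; apply: submx_trans H; exact: addsmxSr.
  by rewrite ltmxErank => /andP [].
apply: (IH (M + v)%MS).
  move=> u /sub_addsmxP [[a b] /= ->].
  have Ha : W (a *m M) by apply: HM; exact: submxMl.
  have Hb : W (b *m v).
    have: (b *m v <= v)%MS by exact: submxMl.
    move=> /sub_rVP [c ->].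
    by have := Wl c v 0 Wv W0; rewrite addr0.
  by have := Wl 1 _ _ Ha Hb; rewrite scale1r.
have := rank_leq_col (M + v)%MS.
lia.
Qed.

Section Main.
Variables (k : fieldType) (V : lmodType k) (n : nat) (I : Type)
  (W : I -> 'rV[k]_n -> Prop).
Hypothesis Wsub : forall i, subsp (W i).

Definition UL (L : list I) (c : 'rV[k]_n) := forall i, In i L -> W i c.

Lemma UL_sub L : subsp (UL L).
Proof.
split; first by move=> i _; case: (Wsub i).
move=> a u v Hu Hv i Hi; case: (Wsub i) => _ H; apply: H; auto.
Qed.

Lemma finite_cap : exists L, forall c, UL L c -> forall i, W i c.
Proof.
suff H: forall d L (M : 'M[k]_n), (forall c, UL L c <-> (c <= M)%MS) ->
   (\rank M < d)%N -> exists L, forall c, UL L c -> forall i, W i c.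
  apply: (H n.+1 nil 1%:M).
    by move=> c; split => [_|_ i []]; rewrite ?submx1.
  by rewrite ltnS rank_leq_col.
elim=> [|d IH] L M HM Hd; first by rewrite ltn0 in Hd.
case: (classic (forall i c, UL L c -> W i c)) => [Hall|].
  by exists L => c Hc i; exact: Hall.
move=> /not_all_ex_not [i /not_all_ex_not [c Hc]]; have [Uc nWc] := imply_to_and _ _ Hc.
have [M2 HM2] := rep_exists (UL_sub (i :: L)).
have sub21 : (M2 <= M)%MS.
  apply/row_subP => j; apply/HM.
  have: UL (i :: L) (row j M2) by apply/HM2; exact: row_sub.
  by move=> H l Hl; apply: H; right.
have n12 : ~~ (M <= M2)%MS.
  apply/negP => H; apply: nWc.
  have: UL (i :: L) c by apply/HM2; apply: submx_trans H; apply/HM.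
  by move=> H'; apply: H'; left.
have: (M2 < M)%MS by rewrite ltmxE sub21.
rewrite ltmxErank => /andP [_ Hr].
apply: (IH (i :: L) M2 HM2).
lia.
Qed.
End Main.

Lemma list_bound (k : fieldType) (E : kcat k) (P : kmodule E) (Xi : Type)
  (Q : Xi -> forall x, MObj P x -> Prop) y :
  (forall xi, big (Q xi)) -> forall L : list Xi, exists A : list (Obj E),
    forall x, ~ In x A -> forall (f : Defs.Hom E x y) p xi, In xi L -> Q xi y (act P f p).
Proof.
move=> Hb; elim=> [|xi L [A HA]].
  by exists nil => x _ f p xi [].
have [_ /(_ y) [B HB]] := Hb xi.
exists (B ++ A) => x Hx f p xi' [<-|Hi].
  by apply: HB => H0; apply: Hx; apply: in_or_app; left.
by apply: HA => // H0; apply: Hx; apply: in_or_app; right.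
Qed.

Theorem lemma4p10 (k : fieldType) (E : kcat k) (P : kmodule E) (Xi : Type)
  (Q : Xi -> forall x, MObj P x -> Prop) :
  locally_finite_cat E ->
  locally_finite_mod P ->
  (forall xi, big (Q xi)) ->
  big (bigcap_sub Q).
Proof.
move=> _ HP Hb; split.
  split; [|split].
  - by move=> x xi; case: (Hb xi) => [[H _] _].
  - by move=> x a p1 p2 H1 H2 xi; case: (Hb xi) => [[_ [H _]] _]; apply: H.
  - by move=> x y f p H xi; case: (Hb xi) => [[_ [_ Hf]] _]; apply: Hf.
move=> y.
have [s Hs] := HP y.
pose lin (c : 'rV[k]_(size s)) : MObj P y := \sum_(i < size s) c 0 i *: s`_i.
have linl : forall a u v, lin (a *: u + v) = a *: lin u + lin v.
  move=> a u v; rewrite /lin scaler_sumr -big_split /=.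
  by apply: eq_bigr => i _; rewrite !mxE scalerDl scalerA.
have lin0 : lin 0 = 0.
  by rewrite /lin big1 // => i _; rewrite mxE scale0r.
pose W xi c := Q xi y (lin c).
have Wsub : forall xi, subsp (W xi).
  move=> xi; case: (Hb xi) => [[H0 [Hl _]] _]; split.
    by rewrite /W lin0.
  by move=> a u v Hu Hv; rewrite /W linl; apply: Hl.
have [L HL] := finite_cap Wsub.
have [A HA] := @list_bound _ _ _ _ _ y Hb L.
exists A => x Hx f p xi.
have [c Hc] := Hs (act P f p).
have E1 : act P f p = lin (\row_i c i).
  by rewrite Hc /lin; apply: eq_bigr => i _; rewrite mxE.
clearbody lin.
have HW : forall xi', In xi' L -> W xi' (\row_i c i).
  move=> xi' Hxi'; have := HA x Hx f p xi' Hxi'; rewrite E1; exact.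
have := HL (\row_i c i) HW xi.
by rewrite E1.
Qed.
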